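(* Let $p\in\mathbb{N}$ and let $C_1,\dots,C_p$ be bivariate copulas satisfying the standing assumption, and set $C_k=C^\perp$ (the independence copula $C^\perp(u,v)=uv$) for $k>p$. Then for all $k>p$ and $(\mathbf{u},x)\in(0,1)^k\times(0,1)$, the forward Rosenblatt functions satisfy $R_k(\mathbf{u},x)=R_p(\mathbf{u}_{[k-p+1,k]},x)$. Consequently, if $(Z_k)_{k\in\mathbb{N}}$ are iid standard uniform, $U_1=Z_1$ and $U_k=R_{k-1}^{-1}((U_1,\dots,U_{k-1})^\top,Z_k)$ for $k\ge2$, then $U_k=R_p^{-1}((U_{k-p},\dots,U_{k-1})^\top,Z_k)$ for all $k>p$.
   Context: Standing assumption: each $C_k$ is $C^\infty$ on $(0,1)^2$ with density strictly positive on $(0,1)^2$. Write $h_k^{(1)}=\partial C_k/\partial u_1$, $h_k^{(2)}=\partial C_k/\partial u_2$; for $\mathbf{u}=(u_1,\dots,u_k)^\top$, $\mathbf{u}_{-i}$ is $\mathbf{u}$ without its $i$th component and $\mathbf{u}_{[a,b]}=(u_a,\dots,u_b)^\top$. Rosenblatt functions: $R^{(1)}_1(u,x)=h_1^{(1)}(u,x)$, $R^{(2)}_1(u,x)=h_1^{(2)}(x,u)$, and for $k\ge2$ $R^{(1)}_k(\mathbf{u},x)=h_k^{(1)}(R^{(2)}_{k-1}(\mathbf{u}_{-1},u_1),R^{(1)}_{k-1}(\mathbf{u}_{-1},x))$, $R^{(2)}_k(\mathbf{u},x)=h_k^{(2)}(R^{(2)}_{k-1}(\mathbf{u}_{-k},x),R^{(1)}_{k-1}(\mathbf{u}_{-k},u_k))$.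 $R_k:=R^{(1)}_k$, and $R_k^{-1}(\mathbf{u},\cdot)$ is the inverse of the bijection $x\mapsto R_k(\mathbf{u},x)$ of $(0,1)$. *)

(* Defs.v *)
From Stdlib Require Import Reals List ClassicalEpsilon.
From Coquelicot Require Import Coquelicot.
Open Scope R_scope.

(** Bivariate copula (values only matter on [0,1]^2). *)
Definition is_copula (C : R -> R -> R) : Prop :=
  (forall u, 0 <= u <= 1 ->
     C u 0 = 0 /\ C 0 u = 0 /\ C u 1 = u /\ C 1 u = u) /\
  (forall u1 u2 v1 v2, 0 <= u1 -> u1 <= u2 -> u2 <= 1 ->
     0 <= v1 -> v1 <= v2 -> v2 <= 1 ->
     C u2 v2 - C u2 v1 - C u1 v2 + C u1 v1 >= 0).

Definition indep_copula : R -> R -> R := fun u v => u * v.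

(** Iterated partial derivatives: [true] = d/du (first argument),
    [false] = d/dv (second argument); the head of the list is applied last. *)
Fixpoint dpart (l : list bool) (f : R -> R -> R) : R -> R -> R :=
  match l with
  | nil => f
  | b :: l' =>
      let g := dpart l' f in
      if b then (fun u v => Derive (fun t => g t v) u)
      else (fun u v => Derive (fun t => g u t) v)
  end.

Definition smooth_open_square (f : R -> R -> R) : Prop :=
  forall (l : list bool) (u v : R), 0 < u < 1 -> 0 < v < 1 ->
    ex_derive (fun t => dpart l f t v) u /\
    ex_derive (fun t => dpart l f u t) v /\
    continuous (fun p : R * R => dpart l f (fst p) (snd p)) (u, v).

Definition copula_density (C : R -> R -> R) : R -> R -> R :=
  dpart (true :: false :: nil) C.

Definition standing_assumption (C : R -> R -> R) : Prop :=
  smooth_open_square C /\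
  (forall u v, 0 < u < 1 -> 0 < v < 1 -> copula_density C u v > 0).

Definition h1 (C : R -> R -> R) (u v : R) : R := Derive (fun t => C t v) u.
Definition h2 (C : R -> R -> R) (u v : R) : R := Derive (fun t => C u t) v.

(** Rosenblatt functions (R^(1)_k, R^(2)_k) for the family Cs (indexed from 1;
    Cs 0 is unused); vectors u in (0,1)^k are lists of length k.
    Convention R^(1)_0(.,x) = R^(2)_0(.,x) = x, with which the k=1 step
    gives exactly R^(1)_1(u,x)=h_1^(1)(u,x), R^(2)_1(u,x)=h_1^(2)(x,u). *)
Fixpoint Ros (Cs : nat -> R -> R -> R) (k : nat)
  : (list R -> R -> R) * (list R -> R -> R) :=
  match k with
  | O => (fun _ x => x, fun _ x => x)
  | S k' =>
      let R1 := fst (Ros Cs k') in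
      let R2 := snd (Ros Cs k') in
      (fun u x => h1 (Cs (S k')) (R2 (tl u) (hd 0 u)) (R1 (tl u) x),
       fun u x => h2 (Cs (S k')) (R2 (removelast u) x)
                                 (R1 (removelast u) (last u 0)))
  end.

Definition RosF (Cs : nat -> R -> R -> R) (k : nat) : list R -> R -> R :=
  fst (Ros Cs k).

Definition RosInv (Cs : nat -> R -> R -> R) (k : nat) (u : list R) (z : R) : R :=
  epsilon (inhabits 0) (fun y => 0 < y < 1 /\ RosF Cs k u y = z).

Definition in_unit_open (x : R) : Prop := 0 < x < 1.

(* Main.v *)
Require Import Defs.
From Stdlib Require Import Reals List Lia ClassicalEpsilon FunctionalExtensionality.
From Coquelicot Require Import Coquelicot.
Open Scope R_scope.

Lemma h1_indep a b : h1 indep_copula a b = b.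
Proof.
  unfold h1, indep_copula. apply is_derive_unique.
  auto_derive; auto; ring.
Qed.

Lemma shift_lemma (p : nat) (Cs : nat -> R -> R -> R)
  (Hind : forall k, (p < k)%nat -> Cs k = indep_copula) :
  forall n u x, RosF Cs (p + n) u x = RosF Cs p (skipn n u) x.
Proof.
  induction n as [|n IH]; intros u x.
  - rewrite Nat.add_0_r. reflexivity.
  - rewrite Nat.add_succ_r. unfold RosF. simpl.
    rewrite (Hind (S (p+n))) by lia. rewrite h1_indep.
    fold (RosF Cs (p+n)). rewrite IH.
    destruct u; simpl; [destruct n|]; reflexivity.
Qed.

Theorem mainTheorem4 (p : nat) (Cs : nat -> R -> R -> R)
  (Hcop : forall k, (1 <= k <= p)%nat -> is_copula (Cs k) /\ standing_assumption (Cs k))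
  (Hind : forall k, (p < k)%nat -> Cs k = indep_copula) :
  (forall (k : nat) (u : list R) (x : R), (p < k)%nat ->
     length u = k -> List.Forall in_unit_open u -> in_unit_open x ->
     RosF Cs k u x = RosF Cs p (skipn (k - p) u) x) /\
  (forall (Z U : nat -> R),
     (forall k, (1 <= k)%nat -> in_unit_open (Z k)) ->
     U 1%nat = Z 1%nat ->
     (forall k, (2 <= k)%nat ->
        U k = RosInv Cs (k - 1) (map U (seq 1 (k - 1))) (Z k)) ->
     forall k, (p < k)%nat ->
        U k = RosInv Cs p (map U (seq (k - p) p)) (Z k)).
Proof.
  split.
  - intros k u x Hk _ _ _.
    replace k with (p + (k - p))%nat at 1 by lia.
    apply shift_lemma; auto.
  - intros Z U HZ HU1 HU k Hk.
    destruct (Nat.eq_dec k 1) as [->|Hk1].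
    + assert (p = 0%nat) by lia. subst p. simpl.
      unfold RosInv. rewrite HU1.
      destruct (epsilon_spec (inhabits 0) (fun y => 0 < y < 1 /\ RosF Cs 0 nil y = Z 1%nat)) as [_ E].
      { exists (Z 1%nat). split; [apply HZ; lia| reflexivity]. }
      unfold RosF in E. simpl in E. symmetry. exact E.
    + rewrite HU by lia. unfold RosInv.
      assert (Hf : RosF Cs (k - 1) (map U (seq 1 (k - 1))) =
                   RosF Cs p (map U (seq (k - p) p))).
      { apply functional_extensionality; intro y.
        replace (k - 1)%nat with (p + (k - 1 - p))%nat at 1 by lia.
        rewrite shift_lemma by auto.
        rewrite skipn_map, skipn_seq.
        f_equal. f_equal. f_equal; lia. }
      rewrite Hf. reflexivity.
Qed.
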